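(* If $G$ is a tropical $\mathfrak{S}$-Gröbner basis of $I=\langle f_1,\dots,f_s\rangle$, then $G$ is a tropical Gröbner basis of $I$ for the tropical term order $\le$, i.e. the monomial ideal generated by $\{LM(g):g\in G\}$ equals $LM(I)$, the monomial ideal generated by $\{LM(f): f\in I\}$.
   Context: Let $k$ be a field with a valuation $val$, $A=k[X_1,\dots,X_n]$, $T$ the set of monomials of $A$, $|f|$ the total degree. Fix $w\in val(k^* )^n$ and a monomial order $\le_1$. Tropical term order: for $a,b\in k^*$, $ax^\alpha<bx^\beta$ if $|x^\alpha|<|x^\beta|$, or equal degrees and $val(a)+w\cdot\alpha>val(b)+w\cdot\beta$, or equal degrees, equal such quantities and $x^\alpha<_1x^\beta$; $ax^\alpha=_{\le}uax^\alpha$ when $val(u)=0$. $LT(f)$ is the largest term of $f$, $LM(f)$ its monomial. Let $f_1,\dots,f_s\in A$ ordered by increasing degree, $I=\langle f_1,\dots,f_s\rangle$, $(e_i)$ the canonical basis of $A^s$. Tame syzygy: $(a_1,\dots,a_s)\in A^s$ with $\sum a_jf_j=0$ and an $i$ with $a_i\neq0$, $a_j=0$ for $j>i$, $|a_jf_j|\le|a_if_i|$ for $j<i$; leading monomial $LM(a_i)e_i$; $LM(TSyz(F))$ is the submodule generated by these. Fix a degree-refining monomial order $\le_m$. Order $\le_{sign}$: $x^\alpha e_i\le_{sign}x^\beta e_j$ if $i<j$; or $i=j$ and $|x^\alpha f_i|<|x^\beta f_i|$; or $i=j$, equal degrees, and either ($x^\alpha e_i\notin LM(TSyz(F))$, $x^\beta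 e_i\in LM(TSyz(F))$), or (both in and $x^\alpha\le_mx^\beta$), or (both not in and $x^\alpha\le_mx^\beta$). $I_{\le_{sign}x^\alpha e_i}=\mathrm{Span}_k\{x^\beta f_j:x^\beta e_j\le_{sign}x^\alpha e_i\}$; the signature $S(f)$ of nonzero $f\in I$ is the smallest $x^\alpha e_i$ with $f\in I_{\le_{sign}x^\alpha e_i}$; $\tau S(g)$ means $\tau x^\alpha e_i$ if $S(g)=x^\alpha e_i$. $e\in I$ $\mathfrak{S}$-reduces to $g$ with $h\in I$ if $e-cth=g$ for some $t\in T,c\in k^*$, with $LT(g)<LT(e)$, $LM(g)\neq LM(e)$, $S(th)<_{sign}S(e)$; $\mathfrak{S}$-irreducible means no $h\in I$ $\mathfrak{S}$-reduces it. A tropical $\mathfrak{S}$-Gröbner basis is a set $G\subset I$ of $\mathfrak{S}$-irreducible polynomials such that every $\mathfrak{S}$-irreducible $h\in I$ has $g\in G$, $t\in T$ with $LM(tg)=LM(h)$ and $tS(g)=S(h)$. *)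

(* Defs.v *)
From HB Require Import structures.
From mathcomp Require Import all_boot all_order all_algebra.
From mathcomp Require Import mpoly.
Set Implicit Arguments. Unset Strict Implicit. Unset Printing Implicit Defensive.
Import Order.TTheory GRing.Theory Num.Theory.
Local Open Scope ring_scope.

(* val : k -> R with R a real (ordered) domain; the value at 0 is irrelevant. *)
Definition is_valuation (K : fieldType) (R : realDomainType) (val : K -> R) :=
  (forall a b : K, a != 0 -> b != 0 -> val (a * b) = val a + val b) /\
  (forall a b : K, a != 0 -> b != 0 -> a + b != 0 ->
      Num.min (val a) (val b) <= val (a + b)).

Definition in_val_group (K : fieldType) (R : realDomainType) (val : K -> R)
  (n : nat) (w : 'I_n -> R) := forall i, exists c : K, c != 0 /\ val c = w i.

Definition monomial_order (n : nat) (le : rel 'X_{1..n}) :=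
  [/\ reflexive le, antisymmetric le, transitive le, total le
    & (forall m1 m2 m3, le m1 m2 -> le (m1 + m3)%MM (m2 + m3)%MM)] /\
  (forall m, le 0%MM m).

Definition degree_refining (n : nat) (le : rel 'X_{1..n}) :=
  forall m1 m2, (mdeg m1 < mdeg m2)%N -> le m1 m2.

(* total degree |f| (0 for f = 0) *)
Definition tdeg (K : fieldType) (n : nat) (p : {mpoly K[n]}) : nat := (msize p).-1.

Section Tropical.
Variables (K : fieldType) (R : realDomainType) (val : K -> R) (n : nat)
  (w : 'I_n -> R) (le1 : rel 'X_{1..n}).

Definition wdot (m : 'X_{1..n}) : R := \sum_(i < n) w i *+ m i.

Definition term_lt (t1 t2 : K * 'X_{1..n}) : bool :=
  let: (a, al) := t1 in let: (b, be) := t2 in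
  [|| (mdeg al < mdeg be)%N,
      (mdeg al == mdeg be) && (val b + wdot be < val a + wdot al)
    | [&& mdeg al == mdeg be, val a + wdot al == val b + wdot be,
          le1 al be & al != be]].

(* LM(f): the monomial of the largest term of f (for f = 0: 0%MM, never used) *)
Definition LM (p : {mpoly K[n]}) : 'X_{1..n} :=
  foldr (fun m acc => if term_lt (p@_acc, acc) (p@_m, m) then m else acc)
        (head 0%MM (msupp p)) (msupp p).

Definition LT (p : {mpoly K[n]}) : K * 'X_{1..n} := (p@_(LM p), LM p).

Definition in_ideal_gen (S : {mpoly K[n]} -> Prop) (p : {mpoly K[n]}) : Prop :=
  exists l : seq ({mpoly K[n]} * {mpoly K[n]}),
    (forall x, x \in l -> S x.2) /\ p = \sum_(x <- l) x.1 * x.2.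

Variables (lem : rel 'X_{1..n}) (s : nat) (f : 'I_s -> {mpoly K[n]}).

Definition inI (p : {mpoly K[n]}) : Prop :=
  exists a : 'I_s -> {mpoly K[n]}, p = \sum_(j < s) a j * f j.

Definition tame_syz (a : 'I_s -> {mpoly K[n]}) (i : 'I_s) : Prop :=
  [/\ \sum_(j < s) a j * f j = 0, a i != 0,
      (forall j : 'I_s, (i < j)%N -> a j = 0)
    & (forall j : 'I_s, (j < i)%N -> (tdeg (a j * f j) <= tdeg (a i * f i))%N)].

(* module monomial x^al e_i encoded as (al, i) *)
Definition LMTSyz_gen (x : 'X_{1..n} * 'I_s) : Prop :=
  exists a, tame_syz a x.2 /\ LM (a x.2) = x.1.

(* x^al e_i belongs to the submodule of A^s generated by the LM(a_i) e_i *)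
Definition in_LMTSyz (x : 'X_{1..n} * 'I_s) : Prop :=
  exists l : seq ({mpoly K[n]} * ('X_{1..n} * 'I_s)),
    (forall y, y \in l -> LMTSyz_gen y.2) /\
    forall j : 'I_s,
      (if j == x.2 then 'X_[x.1] else 0) =
      \sum_(y <- l) (if y.2.2 == j then y.1 * 'X_[y.2.1] else 0).

Definition sig_le (x y : 'X_{1..n} * 'I_s) : Prop :=
  let: (al, i) := x in let: (be, j) := y in
  (i < j)%N \/
  (i = j /\
   ((tdeg ('X_[al] * f i) < tdeg ('X_[be] * f i))%N \/
    (tdeg ('X_[al] * f i) = tdeg ('X_[be] * f i) /\
     ((~ in_LMTSyz (al, i) /\ in_LMTSyz (be, i)) \/
      (in_LMTSyz (al, i) /\ in_LMTSyz (be, i) /\ lem al be) \/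
      (~ in_LMTSyz (al, i) /\ ~ in_LMTSyz (be, i) /\ lem al be))))).

Definition sig_lt (x y : 'X_{1..n} * 'I_s) : Prop := sig_le x y /\ x <> y.

Definition in_I_le (x : 'X_{1..n} * 'I_s) (p : {mpoly K[n]}) : Prop :=
  exists l : seq (K * ('X_{1..n} * 'I_s)),
    (forall y, y \in l -> sig_le y.2 x) /\
    p = \sum_(y <- l) y.1 *: ('X_[y.2.1] * f y.2.2).

Definition is_sig (p : {mpoly K[n]}) (x : 'X_{1..n} * 'I_s) : Prop :=
  [/\ p != 0, in_I_le x p & forall y, in_I_le y p -> sig_le x y].

(* e S-reduces to g with h  (LT(0), LM(0) treated as -oo / undefined) *)
Definition S_reduces (e g h : {mpoly K[n]}) : Prop :=
  inI e /\ inI h /\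
  exists (t : 'X_{1..n}) (c : K),
    [/\ c != 0, e - c *: ('X_[t] * h) = g,
        g = 0 \/ term_lt (LT g) (LT e),
        g = 0 \/ LM g <> LM e
      & exists sh se, [/\ is_sig ('X_[t] * h) sh, is_sig e se & sig_lt sh se]].

Definition S_irreducible (e : {mpoly K[n]}) : Prop :=
  inI e /\ ~ exists h g, S_reduces e g h.

Definition tropical_S_GB (G : {mpoly K[n]} -> Prop) : Prop :=
  (forall g, G g -> inI g /\ S_irreducible g) /\
  forall h, S_irreducible h -> h != 0 ->
    exists g (t : 'X_{1..n}) sg sh,
      [/\ G g, LM ('X_[t] * g) = LM h, is_sig g sg, is_sig h sh
        & sh = ((t + sg.1)%MM, sg.2)].

End Tropical.

(* Main.v *)
Require Import Defs.
From HB Require Import structures.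
From mathcomp Require Import all_boot all_order all_algebra.
From mathcomp Require Import mpoly.
From Stdlib Require Import Classical ClassicalEpsilon Wellfounded.
Set Implicit Arguments. Unset Strict Implicit. Unset Printing Implicit Defensive.
Import Order.TTheory GRing.Theory Num.Theory.
Local Open Scope ring_scope.

Definition ltm (T : Type) (m : T -> nat) (Rr : T -> T -> Prop) (y x : T) :=
  (m y < m x)%N \/ (m y = m x /\ Rr y x).

Lemma wf_ltm (T : Type) (m : T -> nat) (Rr : T -> T -> Prop) :
  well_founded Rr -> well_founded (ltm m Rr).
Proof.
move=> wfR.
suff H : forall k x, (m x < k)%N -> Acc (ltm m Rr) x by move=> x; apply: (H (m x).+1).
elim=> [//|k IH] x.
elim: (wfR x) => {}x _ IHx Hx.
constructor=> y [Hy|[Ey Ry]].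
  by apply: IH; apply: leq_trans Hy _.
by apply: IHx => //; rewrite Ey.
Qed.

Lemma wf_False (T : Type) : well_founded (fun _ _ : T => False).
Proof. by move=> x; constructor. Qed.

Definition pb (P : Prop) : bool := if excluded_middle_informative P then true else false.
Lemma pbT (P : Prop) : P -> pb P = true.
Proof. by rewrite /pb; case: excluded_middle_informative. Qed.
Lemma pbF (P : Prop) : ~ P -> pb P = false.
Proof. by rewrite /pb; case: excluded_middle_informative. Qed.

Section TermOrder.
Variables (K : fieldType) (R : realDomainType) (val : K -> R) (n : nat)
  (w : 'I_n -> R) (le1 lem : rel 'X_{1..n}) (ns : nat) (f : 'I_ns -> {mpoly K[n]})
  (G : {mpoly K[n]} -> Prop).
Hypothesis Hlem : monomial_order lem.
Hypothesis Hdr : degree_refining lem.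
Hypothesis HGB : tropical_S_GB val w le1 lem f G.
Hypothesis Hval : is_valuation val.
Hypothesis Hle1 : monomial_order le1.

Arguments term_lt : simpl never.
Local Notation tl := (term_lt val w le1).
Definition vk (t : K * 'X_{1..n}) := val t.1 + wdot w t.2.

Lemma tlE x y : tl x y = [|| (mdeg x.2 < mdeg y.2)%N,
   (mdeg x.2 == mdeg y.2) && (vk y < vk x) |
   [&& mdeg x.2 == mdeg y.2, vk x == vk y, le1 x.2 y.2 & x.2 != y.2]].
Proof. by case: x y => [a al] [b be]. Qed.

Lemma le1_anti : antisymmetric le1.
Proof. by case: Hle1 => -[]. Qed.
Lemma le1_trans : transitive le1.
Proof. by case: Hle1 => -[]. Qed.
Lemma le1_total : total le1.
Proof. by case: Hle1 => -[]. Qed.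
Lemma le1_add m1 m2 m3 : le1 m1 m2 -> le1 (m1 + m3)%MM (m2 + m3)%MM.
Proof. by case: Hle1 => -[] _ _ _ _ H _; apply: H. Qed.

Lemma tl_trans x y z : tl x y -> tl y z -> tl x z.
Proof.
rewrite !tlE.
move=> /or3P[H1|/andP[/eqP E1 H1]|/and4P[/eqP E1 /eqP V1 L1 N1]]
       /or3P[H2|/andP[/eqP E2 H2]|/and4P[/eqP E2 /eqP V2 L2 N2]]; apply/or3P.
- by apply: Or31; apply: ltn_trans H1 H2.
- by apply: Or31; rewrite -E2.
- by apply: Or31; rewrite -E2.
- by apply: Or31; rewrite E1.
- by apply: Or32; rewrite E1 E2 eqxx (lt_trans H2 H1).
- by apply: Or32; rewrite E1 E2 eqxx -V2 H1.
- by apply: Or31; rewrite E1.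
- by apply: Or32; rewrite E1 E2 eqxx V1 H2.
- apply: Or33; rewrite E1 E2 V1 V2 !eqxx (le1_trans L1 L2) /=.
  apply/negP=> /eqP Exz; move: N1; rewrite Exz in L1 *.
  by rewrite (@le1_anti y.2 z.2) ?eqxx // L1 L2.
Qed.

Lemma tl_irr x : ~~ tl x x.
Proof. by rewrite tlE ltnn ltxx !eqxx /= andbF. Qed.

Lemma tl_asym x y : tl x y -> ~~ tl y x.
Proof. by move=> H; apply/negP=> H'; move: (tl_trans H H'); rewrite (negbTE (tl_irr x)). Qed.

Lemma tl_total x y : x.2 != y.2 -> tl x y || tl y x.
Proof.
move=> Nxy; rewrite !tlE.
case: (ltngtP (mdeg x.2) (mdeg y.2)) => [h|h|h]; first by [].
  by rewrite ?orbT.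
rewrite ?h ?eqxx /=.
case: (ltgtP (vk x) (vk y)) => [h'|h'|h']; first by rewrite orbT.
  by [].
rewrite ?h' ?eqxx /= Nxy eq_sym Nxy /= !andbT.
by case/orP: (le1_total x.2 y.2) => ->; rewrite ?orbT.
Qed.

Lemma tl_same a b M : tl (a, M) (b, M) = (val b < val a).
Proof. by rewrite tlE /vk /= !eqxx ltnn ltrD2r /= ?andbF ?orbF. Qed.

Lemma tl_eq_r X a b M : val a = val b -> tl X (a, M) = tl X (b, M).
Proof. by move=> E; rewrite !tlE /vk /= E. Qed.

Lemma tl_mono_l a b m Y : tl (a, m) Y -> val a <= val b -> tl (b, m) Y.
Proof.
rewrite !tlE /vk /=.
move=> /or3P[H|/andP[E H]|/and4P[E /eqP V L N]] Hab.
- by rewrite H.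
- by rewrite E (lt_le_trans H) ?orbT // lerD2r.
- rewrite E /=; move: Hab; rewrite le_eqVlt => /orP[/eqP Eab|H].
    by rewrite -Eab V eqxx L N /= !orbT.
  by rewrite -V ltrD2r H orbT.
Qed.

Lemma valM a b : a != 0 -> b != 0 -> val (a * b) = val a + val b.
Proof. by case: Hval => H _; apply: H. Qed.

Lemma val1 : val 1 = 0.
Proof.
have := valM (oner_neq0 K) (oner_neq0 K); rewrite mulr1.
by move=> /(congr1 (fun x => x - val 1)) /=; rewrite subrr addrK.
Qed.

Lemma valN1 : val (-1) = 0.
Proof.
have N1 : (-1 : K) != 0 by rewrite oppr_eq0 oner_neq0.
have := valM N1 N1; rewrite mulrNN mulr1 val1 => /esym/eqP.
by rewrite -mulr2n mulrn_eq0 /= => /eqP.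
Qed.

Lemma valN a : a != 0 -> val (- a) = val a.
Proof.
move=> Ha; have N1 : (-1 : K) != 0 by rewrite oppr_eq0 oner_neq0.
by rewrite -mulN1r valM // valN1 add0r.
Qed.

Lemma val_min a b : a != 0 -> b != 0 -> a + b != 0 ->
  (val a <= val (a + b)) || (val b <= val (a + b)).
Proof. by case: Hval => _ H Ha Hb Hab; rewrite -ge_min; apply: H. Qed.

Lemma val_ultra a b : a != 0 -> b != 0 -> val a < val b ->
  a + b != 0 /\ val (a + b) = val a.
Proof.
move=> Ha Hb Hlt.
have Hab : a + b != 0.
  apply/negP; rewrite addr_eq0 => /eqP Eb; move: Hlt.
  by rewrite Eb valN // ltxx.
split=> //; apply/eqP; rewrite eq_le; apply/andP; split.
  have Nb : - b != 0 by rewrite oppr_eq0.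
  have := val_min Hab Nb; rewrite addrK => /(_ Ha).
  by rewrite valN // (leNgt (val b)) Hlt orbF.
have := val_min Ha Hb Hab => /orP[//|H].
exact: ltW (lt_le_trans Hlt H).
Qed.

Lemma tl_scale c a b m M : c != 0 -> a != 0 -> b != 0 ->
  tl (a, m) (b, M) -> tl (c * a, m) (c * b, M).
Proof.
move=> Hc Ha Hb; rewrite !tlE /vk /= !valM // -!addrA ltrD2l.
by rewrite (inj_eq (addrI _)).
Qed.

Lemma wdotD m1 m2 : wdot w (m1 + m2)%MM = wdot w m1 + wdot w m2.
Proof.
by rewrite /wdot -big_split; apply: eq_bigr => i _; rewrite mnmDE mulrnDr.
Qed.

Lemma tl_shift t a b m M : tl (a, m) (b, M) -> tl (a, (t + m)%MM) (b, (t + M)%MM).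
Proof.
rewrite !tlE /vk /= !mdegD !wdotD ltn_add2l eqn_add2l eqm_add2l.
rewrite (addrCA (val a)) (addrCA (val b)) ltrD2l (inj_eq (addrI _)).
case/or3P=> [->//|->|/and4P[-> -> L ->]]; first by rewrite orbT.
by rewrite ![(t + _)%MM]addmC le1_add // !orbT.
Qed.

Definition charLM (p : {mpoly K[n]}) M :=
  M \in msupp p /\ forall m, m \in msupp p -> m != M -> tl (p@_m, m) (p@_M, M).

Lemma LM_foldr (p : {mpoly K[n]}) s a0 :
  let r := foldr (fun m acc => if tl (p@_acc, acc) (p@_m, m) then m else acc) a0 s in
  r \in a0 :: s /\ forall m, m \in a0 :: s -> m != r -> tl (p@_m, m) (p@_r, r).
Proof.
elim: s => [|m s IH] /=.
  by split; [rewrite mem_seq1 | move=> m; rewrite mem_seq1 => /eqP -> /eqP].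
set r := foldr _ _ _ in IH *; case: IH => Hr IH.
case: ifP => H.
  split; first by rewrite !inE eqxx orbT.
  move=> m' Hm' Nm'.
  have Hm2 : m' \in a0 :: s by move: Hm'; rewrite !inE (negbTE Nm') /=.
  case: (eqVneq m' r) => [->//|N]; exact: tl_trans (IH _ Hm2 N) H.
split; first by move: Hr; rewrite !inE => /orP[->|->]; rewrite ?orbT.
move=> m'; rewrite !inE => /or3P[Hm|Hm|Hm] N.
- by apply: IH; rewrite ?inE ?Hm.
- move/eqP: Hm => Hm; subst m'.
  by have := @tl_total (p@_m, m) (p@_r, r) N; rewrite H orbF.
- by apply: IH; rewrite ?inE ?Hm ?orbT.
Qed.

Lemma LM_char p : p != 0 -> charLM p (LM val w le1 p).
Proof.
rewrite -msupp_eq0 /LM /charLM.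
case E: (msupp p) => [//|m0 s] _.
have [H1 H2] := LM_foldr p (m0 :: s) m0.
rewrite [head _ _]/=.
split; first by move: H1; rewrite !inE orbA orbb.
by move=> m Hm; apply: H2; rewrite inE Hm orbT.
Qed.

Lemma char_LM p M : charLM p M -> LM val w le1 p = M.
Proof.
move=> [HM HC].
have pnz : p != 0 by rewrite -msupp_eq0; move: HM; case: (msupp p).
have [HL HCL] := LM_char pnz.
apply/eqP; apply/negP => /negP N.
have H1 := HC _ HL N.
have H2 := HCL _ HM; rewrite eq_sym in N; have {}H2 := H2 N.
by move: (tl_asym H1); rewrite H2.
Qed.

Lemma LM_scale c p : c != 0 -> p != 0 -> LM val w le1 (c *: p) = LM val w le1 p.
Proof.
move=> Hc Hp; have [HL HC] := LM_char Hp.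
have Hs := perm_mem (msuppZ p Hc).
apply: char_LM; split; first by rewrite Hs.
move=> m; rewrite Hs => Hm N; rewrite !mcoeffZ.
apply: tl_scale => //; rewrite -?mcoeff_msupp //; exact: HC.
Qed.

Lemma LM_mulX t g : g != 0 -> LM val w le1 ('X_[t] * g) = (t + LM val w le1 g)%MM.
Proof.
move=> Hg; have [HL HC] := LM_char Hg.
have Hs := perm_mem (msuppMX g t); rewrite mulrC.
apply: char_LM; split; first by rewrite Hs map_f.
move=> m'; rewrite Hs => /mapP[m Hm ->]; rewrite eqm_add2l => N.
rewrite !mcoeffMX; exact: tl_shift (HC _ Hm N).
Qed.

Lemma LM_cancel r g : r != 0 -> g != 0 ->
  tl (LT val w le1 g) (LT val w le1 r) ->
  r - g != 0 /\ LM val w le1 (r - g) = LM val w le1 r.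
Proof.
rewrite /LT => Hr Hg Hlt.
set M := LM val w le1 r in Hlt *; set M' := LM val w le1 g in Hlt.
have [HrM HrC] := LM_char Hr; have [HgM HgC] := LM_char Hg.
rewrite -/M in HrM HrC; rewrite -/M' in HgM HgC.
have C1 : forall m, m \in msupp g -> tl (g@_m, m) (r@_M, M).
  move=> m Hm; case: (eqVneq m M') => [->//|N]; exact: tl_trans (HgC _ Hm N) Hlt.
have Ha : r@_M != 0 by rewrite -mcoeff_msupp.
have CM : (r - g)@_M != 0 /\ val (r - g)@_M = val r@_M.
  rewrite mcoeffB; case: (eqVneq g@_M 0) => [->|HgM0]; first by rewrite subr0.
  have HgMs : M \in msupp g by rewrite mcoeff_msupp.
  have := C1 _ HgMs; rewrite tl_same => Hv.
  have Ng : - g@_M != 0 by rewrite oppr_eq0.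
  by apply: val_ultra; rewrite // valN.
case: CM => CM1 CM2.
have Hq : r - g != 0 by apply/negP => /eqP E; move: CM1; rewrite E mcoeff0 eqxx.
split=> //; apply: char_LM; split; first by rewrite mcoeff_msupp.
move=> m Hm N; rewrite (tl_eq_r _ _ CM2).
move: Hm; rewrite mcoeff_msupp mcoeffB => Hq'.
case: (eqVneq r@_m 0) => [E|Hrm].
  move: Hq'; rewrite E sub0r oppr_eq0 => Hgm.
  have Hgms : m \in msupp g by rewrite mcoeff_msupp.
  by apply: tl_mono_l (C1 _ Hgms) _; rewrite valN.
have Hrms : m \in msupp r by rewrite mcoeff_msupp.
case: (eqVneq g@_m 0) => [E|Hgm].
  by rewrite E subr0; apply: HrC.
have Hgms : m \in msupp g by rewrite mcoeff_msupp.
have Ng : - g@_m != 0 by rewrite oppr_eq0.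
have := val_min Hrm Ng Hq'; rewrite valN // => /orP[H|H].
  exact: tl_mono_l (HrC _ Hrms N) H.
exact: tl_mono_l (C1 _ Hgms) H.
Qed.

Local Notation sle := (sig_le val w le1 lem f).
Local Notation slt := (sig_lt val w le1 lem f).
Local Notation inL := (in_LMTSyz val w le1 f).

Lemma lem_anti : antisymmetric lem.
Proof. by case: Hlem => -[]. Qed.
Lemma lem_trans : transitive lem.
Proof. by case: Hlem => -[]. Qed.

Lemma sig_anti x y : sle x y -> sle y x -> x = y.
Proof.
case: x y => [al i] [be j] /=.
move=> [Hij|[Eij H1]] [Hji|[Eji H2]].
- by move: (ltn_trans Hij Hji); rewrite ltnn.
- by move: Hij; rewrite Eji ltnn.
- by move: Hji; rewrite Eij ltnn.
- subst j.
  case: H1 => [L1|[E1 S1]]; case: H2 => [L2|[E2 S2]].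
  + by move: (ltn_trans L1 L2); rewrite ltnn.
  + by move: L1; rewrite E2 ltnn.
  + by move: L2; rewrite E1 ltnn.
  + have [La Lb] : lem al be /\ lem be al by tauto.
    by rewrite (@lem_anti al be) // La Lb.
Qed.

Definition rank d (al : 'X_{1..n}) :=
  #|[set b : 'X_{1..n < d.+1} | lem (bmnm b) al && (bmnm b != al)]|.

Lemma rank_lt d y x : lem y x -> y != x -> mdeg y = d -> (rank d y < rank d x)%N.
Proof.
move=> L N Ey; rewrite /rank; apply: proper_card; apply/properP; split.
  apply/subsetP => b; rewrite !inE => /andP[Lb Nb].
  rewrite (lem_trans Lb L) /=; apply/eqP => E; rewrite E in Lb Nb.
  by move: N; rewrite (@lem_anti y x) ?eqxx // L Lb.
have Hy : (mdeg y < d.+1)%N by rewrite Ey.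
by exists (BMultinom Hy); rewrite !inE /= ?L ?N ?eqxx ?andbF.
Qed.

Definition m1 (x : 'X_{1..n} * 'I_ns) : nat := x.2.
Definition m2 (x : 'X_{1..n} * 'I_ns) : nat := tdeg ('X_[x.1] * f x.2).
Definition m3 (x : 'X_{1..n} * 'I_ns) : nat := pb (inL x).
Definition m4 (x : 'X_{1..n} * 'I_ns) : nat := mdeg x.1.
Definition m5 (x : 'X_{1..n} * 'I_ns) : nat := rank (mdeg x.1) x.1.

Lemma slt_lex y x : slt y x ->
  ltm m1 (ltm m2 (ltm m3 (ltm m4 (ltm m5 (fun _ _ => False))))) y x.
Proof.
case: y x => [be j] [al i]; rewrite /sig_lt /= => -[H Nxy].
case: H => [Hji|[Eji H]]; first by left.
subst j; right; split=> //.
case: H => [Lt|[Et S]]; first by left.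
right; split=> //.
have Hne : be != al by apply/eqP => E; apply: Nxy; rewrite E.
have Hfin : lem be al -> m4 (be, i) = m4 (al, i) ->
    ltm m5 (fun _ _ => False) (be, i) (al, i).
  move=> L E; left; rewrite /m5 /=; rewrite /m4 /= in E.
  by rewrite {1}E; apply: rank_lt.
have Hdeg : lem be al -> ltm m4 (ltm m5 (fun _ _ => False)) (be, i) (al, i).
  move=> L; rewrite /ltm /m4 /=.
  case: (ltngtP (mdeg be) (mdeg al)) => [h|h|h]; first by left.
    have L2 := Hdr h.
    by move: Hne; rewrite (@lem_anti be al) ?eqxx // L L2.
  by right; split=> //; apply: Hfin.
case: S => [[N1 I2]|[[I1 [I2 L]]|[N1 [N2 L]]]].
- by left; rewrite /m3 /= pbF // pbT.
- by right; split; [rewrite /m3 /= !pbT | apply: Hdeg].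
- by right; split; [rewrite /m3 /= !pbF | apply: Hdeg].
Qed.

Lemma wf_slt : well_founded slt.
Proof.
apply: (Inclusion.wf_incl _ _ _ slt_lex).
by do 5 apply: wf_ltm; apply: wf_False.
Qed.


Definition good (r : {mpoly K[n]}) := exists g u,
  [/\ G g, g != 0 & LM val w le1 r = (u + LM val w le1 g)%MM].

Lemma inI_mulX t h : inI f h -> inI f ('X_[t] * h).
Proof.
case=> a ->; exists (fun j => 'X_[t] * a j); rewrite mulr_sumr.
by apply: eq_bigr => j _; rewrite mulrA.
Qed.

Lemma good_irr r : S_irreducible val w le1 lem f r -> r != 0 -> good r.
Proof.
move=> Hi Hr; case: HGB => _ /(_ r Hi Hr) [g [t [sg [sh [Gg EL Sg Sh _]]]]].
have gnz : g != 0 by case: Sg.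
by exists g, t; split => //; rewrite -EL LM_mulX.
Qed.

Lemma main_ind x : forall r, inI f r -> is_sig val w le1 lem f r x -> good r.
Proof.
elim/(well_founded_ind wf_slt): x => x IH r HIr Hsig.
have Hr : r != 0 by case: Hsig.
case: (classic (S_irreducible val w le1 lem f r)) => [Hi|Hni]; first exact: good_irr.
have [h [g' Hred]] : exists h g', S_reduces val w le1 lem f r g' h.
  by apply: NNPP => N; apply: Hni; split.
case: Hred => _ [HIh [t [c [Hc Eg Hlt _ [sh [se [Ssh Sse Hsl]]]]]]].
have Exse : x = se.
  apply: sig_anti.
    by case: Hsig => _ _; apply; case: Sse.
  by case: Sse => _ _; apply; case: Hsig.
subst se.
have Hth : 'X_[t] * h != 0 by case: Ssh.
have [g [u [Gg gnz EL]]] := IH _ Hsl _ (inI_mulX t HIh) Ssh.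
exists g, u; split => //; rewrite -EL.
case: (eqVneq g' 0) => [E0|Hg'].
  have Er : r = c *: ('X_[t] * h) by apply/eqP; rewrite -subr_eq0 Eg E0.
  by rewrite Er LM_scale.
case: Hlt => [E0|Hlt]; first by rewrite E0 eqxx in Hg'.
have [_ EL2] := LM_cancel Hr Hg' Hlt.
have Eq : r - g' = c *: ('X_[t] * h) by rewrite -Eg opprB addrCA subrr addr0.
by rewrite -EL2 Eq LM_scale.
Qed.

Lemma good_all r : inI f r -> r != 0 -> good r.
Proof.
move=> HIr Hr.
case: (classic (S_irreducible val w le1 lem f r)) => [Hi|Hni]; first exact: good_irr.
have [h [g' Hred]] : exists h g', S_reduces val w le1 lem f r g' h.
  by apply: NNPP => N; apply: Hni; split.
case: Hred => _ [HIh [t [c [Hc Eg Hlt _ [sh [se [Ssh Sse Hsl]]]]]]].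
exact: main_ind Sse.
Qed.

End TermOrder.

Lemma ideal_add (K : fieldType) (n : nat) (S : {mpoly K[n]} -> Prop) a b :
  in_ideal_gen S a -> in_ideal_gen S b -> in_ideal_gen S (a + b).
Proof.
case=> l1 [H1 ->] [l2 [H2 ->]]; exists (l1 ++ l2); rewrite big_cat; split=> //.
by move=> x; rewrite mem_cat => /orP[/H1|/H2].
Qed.

Lemma ideal_mul (K : fieldType) (n : nat) (S : {mpoly K[n]} -> Prop) c a :
  in_ideal_gen S a -> in_ideal_gen S (c * a).
Proof.
case=> l [H ->]; exists [seq (c * y.1, y.2) | y <- l]; rewrite big_map mulr_sumr.
split; last by apply: eq_bigr => y _; rewrite mulrA.
move=> x Hx; case/mapP: Hx => y Hy Ex; rewrite Ex /=; exact: H.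
Qed.

Lemma ideal_sub (K : fieldType) (n : nat) (S1 S2 : {mpoly K[n]} -> Prop) p :
  (forall q, S2 q -> in_ideal_gen S1 q) -> in_ideal_gen S2 p -> in_ideal_gen S1 p.
Proof.
move=> HS [l [Hl ->]]; elim: l Hl => [|x l IH] Hl.
  by exists [::]; rewrite !big_nil.
rewrite big_cons; apply: ideal_add.
  by apply: ideal_mul; apply: HS; apply: Hl; rewrite mem_head.
by apply: IH => y Hy; apply: Hl; rewrite in_cons Hy orbT.
Qed.

Theorem mainTheorem2 (K : fieldType) (R : realDomainType) (val : K -> R)
  (n : nat) (w : 'I_n -> R) (le1 lem : rel 'X_{1..n})
  (s : nat) (f : 'I_s -> {mpoly K[n]}) (G : {mpoly K[n]} -> Prop) :
  is_valuation val ->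
  in_val_group val w ->
  monomial_order le1 ->
  monomial_order lem -> degree_refining lem ->
  (forall i j : 'I_s, (i <= j)%N -> (tdeg (f i) <= tdeg (f j))%N) ->
  tropical_S_GB val w le1 lem f G ->
  forall p : {mpoly K[n]},
    in_ideal_gen (fun q => exists g, [/\ G g, g != 0 & q = 'X_[LM val w le1 g]]) p <->
    in_ideal_gen (fun q => exists r, [/\ inI f r, r != 0 & q = 'X_[LM val w le1 r]]) p.
Proof.
move=> Hval _ Hle1 Hlem Hdr _ HGB p; split.
  case=> l [Hl Ep]; exists l; split=> // x /Hl [g [Gg gnz ->]].
  by exists g; split=> //; case: HGB => /(_ g Gg) [].
apply: ideal_sub => q [r [HIr Hr ->]].
have [g [u [Gg gnz EL]]] := good_all Hlem Hdr HGB Hval Hle1 HIr Hr.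
exists [:: ('X_[u], 'X_[LM val w le1 g])]; rewrite big_seq1 EL mpolyXD; split=> //.
by move=> x; rewrite mem_seq1 => /eqP -> /=; exists g.
Qed.
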